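(* Assume: the vectors $\pi(t)\in\mathbb R^m$ have nonnegative entries summing to $1$ and satisfy (i) $\pi(t)^\top=\pi(t+1)^\top A(t)$ for all $t$, (ii) $|[A(s:t)]_{ij}-\pi_j(t)|\le B\lambda^{s-t}$ for all $i,j$, $s\ge t\ge0$, with $B>0$, $\lambda\in(0,1)$, and (iii) $\pi_i(t)\ge\eta$ for all $i,t$ for some $\eta>0$; there is $R\ge1$ with $\mathrm{dist}(x,\Omega)\le R\max_{i}\mathrm{dist}(x,\Omega_i)$ for all $x\in U=\mathrm{conv}(\bigcup_i\Omega_i)$; $\theta_i(0)\in\Omega_i$ for all $i$; and $\{\alpha(t)\}$ is nonincreasing. Let $\theta_i(t)$ be the DPG iterates, $\bar\theta(t)=\sum_j\pi_j(t)\theta_j(t)$, $w(t)=P_\Omega[\bar\theta(t)]$, $\beta(t)=\sum_i\|\phi_i(t)\|$, $\psi(t)=\alpha(t)\sum_{r=0}^{t-1}\lambda^{t-r-1}\beta(r)$, and define $D_1=B\sum_j\|\theta_j(0)\|$, $D_2=mBC$, $D_3=2C(1+R/\eta)$, $D_4=\eta/2$, $b=\sqrt{\eta/m}$, $a=\frac{D_3B}{(1-\lambda)b}$, $D_5=C^2+a^2/2$, $D_{13}=D_1D_3$, $D_{23}=D_2D_3$. Then for every $v\in\Omega$ and every $t\ge0$, $$\sum_{i=1}^m\pi_i(t+1)\|\theta_i(t+1)-v\|^2+ab\,\psi(t+1)\le\sum_{i=1}^m\pi_i(t)\|\theta_i(t)-v\|^2+ab\,\psi(t)-2\alpha(t)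c^\top(w(t)-v)+D_5\alpha^2(t)-D_4\sum_{i=1}^m\|\phi_i(t)\|^2+D_{13}\alpha(t)\lambda^t+D_{23}\alpha(t)\sum_{r=0}^{t-1}\lambda^{t-r-1}\alpha(r).$$
   Context: Agents $\mathcal V=\{1,\dots,m\}$. $A(t)=[a_{ij}(t)]\in\mathbb R^{m\times m}$, $t\in\mathbb Z_{\ge0}$, are row-stochastic matrices with nonnegative entries; for $s\ge t$, $A(s:t)=A(s-1)\cdots A(t)$, $A(t:t)=I$. $\Omega_1,\dots,\Omega_m\subseteq\mathbb R^p$ are nonempty closed convex sets with $\Omega=\bigcap_i\Omega_i\ne\emptyset$; $c\in\mathbb R^p$, $C=\|c\|$; $\alpha(t)>0$ are stepsizes. $P_K$ denotes Euclidean projection onto a closed convex set $K$ and $\mathrm{dist}(x,K)=\inf_{z\in K}\|x-z\|$. DPG iteration: $\theta_i(t+1)=P_{\Omega_i}\big[\sum_j a_{ij}(t)\theta_j(t)-\alpha(t)c\big]$, and $\phi_i(t)=\theta_i(t+1)-\big[\sum_j a_{ij}(t)\theta_j(t)-\alpha(t)c\big]$. *)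

(* Defs.v *)
From HB Require Import structures.
From mathcomp Require Import all_boot all_order all_algebra.
From mathcomp Require Import all_classical all_reals all_analysis.
Import numFieldNormedType.Exports.
Set Implicit Arguments. Unset Strict Implicit. Unset Printing Implicit Defensive.
Import Order.TTheory GRing.Theory Num.Theory.
Local Open Scope classical_set_scope.
Local Open Scope ring_scope.

Section Defs.
Variable R : realType.

Definition dotp (p : nat) (u v : 'rV[R]_p) : R := \sum_(k < p) u ord0 k * v ord0 k.
Definition enorm (p : nat) (u : 'rV[R]_p) : R := Num.sqrt (dotp u u).

Definition dist_to (p : nat) (x : 'rV[R]_p) (K : set 'rV[R]_p) : R :=
  inf [set enorm (x - z) | z in K].

Definition is_proj (p : nat) (K : set 'rV[R]_p) (y x : 'rV[R]_p) : Prop :=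
  K x /\ forall z, K z -> enorm (y - x) <= enorm (y - z).

Definition conv_hull (p : nat) (S : set 'rV[R]_p) : set 'rV[R]_p :=
  [set x | exists (n : nat) (w : 'I_n -> R) (z : 'I_n -> 'rV[R]_p),
     (forall k, 0 <= w k) /\ \sum_(k < n) w k = 1 /\ (forall k, S (z k)) /\
     x = \sum_(k < n) w k *: z k].

Definition row_stochastic (m : nat) (M : 'M[R]_m) : Prop :=
  (forall i j, 0 <= M i j) /\ (forall i, \sum_(j < m) M i j = 1).

(* Aprod A t k = A(t+k-1) ... A(t); so A(s:t) = Aprod A t (s - t), A(t:t) = I *)
Fixpoint Aprod (m : nat) (A : nat -> 'M[R]_m) (t k : nat) : 'M[R]_m :=
  match k with
  | 0 => 1%:M
  | k'.+1 => A (t + k')%N *m Aprod A t k'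
  end.

Definition Atrans (m : nat) (A : nat -> 'M[R]_m) (s t : nat) : 'M[R]_m :=
  Aprod A t (s - t).

End Defs.

(* Main.v *)
Require Import Defs.
From HB Require Import structures.
From mathcomp Require Import all_boot all_order all_algebra.
From mathcomp Require Import all_classical all_reals all_analysis.
From mathcomp Require Import ring lra.
Import numFieldNormedType.Exports.
Import Order.TTheory GRing.Theory Num.Theory.
Local Open Scope classical_set_scope.
Local Open Scope ring_scope.
Set Implicit Arguments. Unset Strict Implicit.
Section Norms.
Variable R : realType.
Variable p : nat.
Implicit Types u v : 'rV[R]_p.

Lemma dotpC u v : dotp u v = dotp v u.
Proof. by apply: eq_bigr => k _; rewrite mulrC. Qed.

Lemma dotpDr u v w : dotp u (v + w) = dotp u v + dotp u w.
Proof. by rewrite /dotp -big_split; apply: eq_bigr => k _; rewrite mxE mulrDr. Qed.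

Lemma dotpZr u v (a : R) : dotp u (a *: v) = a * dotp u v.
Proof. by rewrite /dotp mulr_sumr; apply: eq_bigr => k _; rewrite mxE mulrCA. Qed.

Lemma dotpNr u v : dotp u (- v) = - dotp u v.
Proof. by rewrite -scaleN1r dotpZr mulN1r. Qed.

Lemma dotpBr u v w : dotp u (v - w) = dotp u v - dotp u w.
Proof. by rewrite dotpDr dotpNr. Qed.

Lemma dotpDl u v w : dotp (v + w) u = dotp v u + dotp w u.
Proof. by rewrite dotpC dotpDr !(dotpC u). Qed.

Lemma dotpZl u v (a : R) : dotp (a *: v) u = a * dotp v u.
Proof. by rewrite dotpC dotpZr dotpC. Qed.

Lemma dotpNl u v : dotp (- v) u = - dotp v u.
Proof. by rewrite dotpC dotpNr dotpC. Qed.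

Lemma dotpBl u v w : dotp (v - w) u = dotp v u - dotp w u.
Proof. by rewrite dotpDl dotpNl. Qed.

Lemma dotp_sumr u n (f : 'I_n -> 'rV[R]_p) :
  dotp u (\sum_(i < n) f i) = \sum_(i < n) dotp u (f i).
Proof.
rewrite /dotp exchange_big /=; apply: eq_bigr => k _.
by rewrite summxE mulr_sumr.
Qed.

Lemma dotpp_ge0 u : 0 <= dotp u u.
Proof. by apply: sumr_ge0 => k _; rewrite -expr2 sqr_ge0. Qed.

Lemma enorm_ge0 u : 0 <= enorm u.
Proof. exact: sqrtr_ge0. Qed.

Lemma enorm_sq u : enorm u ^+ 2 = dotp u u.
Proof. by rewrite /enorm sqr_sqrtr // dotpp_ge0. Qed.

Lemma quad_cs (a b d : R) : 0 <= b ->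
  (forall s, 0 <= a - 2 * s * d + s ^+ 2 * b) -> d ^+ 2 <= a * b.
Proof.
move=> b0 H.
have [b00|bp] := eqVneq b 0.
  have [d0|dn] := eqVneq d 0; first by rewrite d0 b00 expr0n /= mulr0.
  have := H ((a + 1) / (2 * d)); rewrite b00 mulr0 addr0.
  have -> : 2 * ((a + 1) / (2 * d)) * d = a + 1.
    by field.
  lra.
have bpos : 0 < b by rewrite lt_neqAle eq_sym bp.
have := H (d / b).
have -> : a - 2 * (d / b) * d + (d / b) ^+ 2 * b = a - d ^+ 2 / b.
  by field.
rewrite subr_ge0 ler_pdivrMr //.
Qed.

Lemma dotp_sq u v : dotp u v ^+ 2 <= dotp u u * dotp v v.
Proof.
apply: quad_cs; first exact: dotpp_ge0.
move=> s; have := dotpp_ge0 (u - s *: v).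
rewrite !dotpBl !dotpBr !dotpZl !dotpZr (dotpC v u).
suff -> : dotp u u - s * dotp u v - (s * dotp u v - s * (s * dotp v v)) =
  dotp u u - 2 * s * dotp u v + s ^+ 2 * dotp v v by [].
ring.
Qed.

Lemma dotp_le u v : `|dotp u v| <= enorm u * enorm v.
Proof.
rewrite /enorm -sqrtrM ?dotpp_ge0 // -sqrtr_sqr ler_sqrt ?dotp_sq //.
by rewrite mulr_ge0 ?dotpp_ge0.
Qed.

Lemma dotp_le1 u v : dotp u v <= enorm u * enorm v.
Proof. exact: le_trans (ler_norm _) (dotp_le u v). Qed.

Lemma dotp_ge1 u v : - (enorm u * enorm v) <= dotp u v.
Proof. by have := dotp_le u v; rewrite ler_norml => /andP[]. Qed.

Lemma enormD_sq u v : enorm (u + v) ^+ 2 = enorm u ^+ 2 + 2 * dotp u v + enorm v ^+ 2.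
Proof. rewrite !enorm_sq dotpDl !dotpDr (dotpC v u); ring. Qed.

Lemma enormB_sq u v : enorm (u - v) ^+ 2 = enorm u ^+ 2 - 2 * dotp u v + enorm v ^+ 2.
Proof. rewrite !enorm_sq dotpBl !dotpBr (dotpC v u); ring. Qed.

Lemma enormD u v : enorm (u + v) <= enorm u + enorm v.
Proof.
rewrite -(ger0_norm (addr_ge0 (enorm_ge0 u) (enorm_ge0 v))) -sqrtr_sqr.
rewrite /enorm ler_sqrt ?sqr_ge0 //.
rewrite -enorm_sq enormD_sq sqrrD.
have := dotp_le1 u v. rewrite -/(enorm u) -/(enorm v) mulr2n. lra.
Qed.

Lemma enormZ u (a : R) : enorm (a *: u) = `|a| * enorm u.
Proof.
by rewrite /enorm dotpZl dotpZr mulrA -expr2 sqrtrM ?sqr_ge0 // sqrtr_sqr.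
Qed.

Lemma enormN u : enorm (- u) = enorm u.
Proof. by rewrite -scaleN1r enormZ normrN1 mul1r. Qed.

Lemma enormBC u v : enorm (u - v) = enorm (v - u).
Proof. by rewrite -enormN opprB. Qed.

Lemma enorm0 : enorm (0 : 'rV[R]_p) = 0.
Proof. by rewrite -(scale0r (0 : 'rV[R]_p)) enormZ normr0 mul0r. Qed.

Lemma enorm_sum_le n (a : 'I_n -> R) (y : 'I_n -> 'rV[R]_p) :
  enorm (\sum_(j < n) a j *: y j) <= \sum_(j < n) `|a j| * enorm (y j).
Proof.
elim/big_ind2: _ => [|x1 x2 y1 y2 H1 H2|j _].
- by rewrite enorm0.
- by apply: le_trans (enormD _ _) _; exact: lerD.
- by rewrite enormZ.
Qed.

End Norms.

Local Open Scope convex_scope.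
Section Proj.
Variable R : realType.
Variable p : nat.

Lemma proj_dot (K : set 'rV[R]_p) y x z : convex_set K -> is_proj K y x -> K z ->
  dotp (y - x) (z - x) <= 0.
Proof.
move=> cK [Kx minx] Kz.
set d := dotp (y - x) (z - x).
have e0 := dotpp_ge0 (z - x); set e := dotp (z - x) (z - x) in e0.
rewrite leNgt; apply/negP => dpos.
have dep : 0 < d + e by lra.
pose s := d / (d + e).
have s0 : 0 <= s by rewrite divr_ge0 // ltW.
have s1 : s <= 1 by rewrite ler_pdivrMr // mul1r; lra.
have spos : 0 < s by rewrite divr_gt0.
have := cK z x (Itv01 s0 s1) (mem_set Kz) (mem_set Kx).
move/set_mem => Kpt.
have Kpt' : K (s *: z + (1 - s) *: x) by exact: Kpt.
have := minx _ Kpt'.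
have -> : y - (s *: z + (1 - s) *: x) = (y - x) - s *: (z - x).
  by rewrite scalerBl scale1r scalerBr addrCA opprD addrA.
move=> h.
have h2 : enorm (y - x) ^+ 2 <= enorm (y - x - s *: (z - x)) ^+ 2.
  by rewrite ler_pXn2r // ?nnegrE ?enorm_ge0.
move: h2; rewrite [enorm (y - x - _) ^+ 2]enormB_sq dotpZr enormZ exprMn (ger0_norm (ltW spos)) (enorm_sq (z - x)) -/e -/d => h3.
have h4 : 2 * d <= s * e.
  have : s * (2 * d) <= s * (s * e) by nra.
  by rewrite ler_pM2l.
have h5 : s * e <= d.
  rewrite /s mulrAC ler_pdivrMr //; nra.
lra.
Qed.

Lemma proj_ineq (K : set 'rV[R]_p) y x z : convex_set K -> is_proj K y x -> K z ->
  enorm (x - z) ^+ 2 <= enorm (y - z) ^+ 2 - enorm (x - y) ^+ 2.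
Proof.
move=> cK px Kz; have := proj_dot cK px Kz.
have -> : y - z = (y - x) - (z - x) by rewrite opprB addrA subrK.
rewrite !enorm_sq !dotpBl !dotpBr (dotpC z x) (dotpC y x) (dotpC z y).
lra.
Qed.
End Proj.

Section Consensus.
Variable R : realType.
Variables m p : nat.
Variable A : nat -> 'M[R]_m.

Lemma Atrans_succ s t : (s <= t)%N -> Atrans A t.+1 s = A t *m Atrans A t s.
Proof. by move=> st; rewrite /Atrans subSn //= subnKC. Qed.

Lemma Atrans_refl t : Atrans A t t = 1%:M.
Proof. by rewrite /Atrans subnn. Qed.

Variable X U : nat -> 'M[R]_(m, p).
Hypothesis HX : forall t, X t.+1 = A t *m X t + U t.

Lemma X_expand t : X t = Atrans A t 0 *m X 0%N + \sum_(0 <= r < t) Atrans A t r.+1 *m U r.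
Proof.
elim: t => [|t IH]; first by rewrite big_geq // addr0 Atrans_refl mul1mx.
rewrite HX IH big_nat_recr //= Atrans_refl mul1mx mulmxDr mulmxA Atrans_succ //.
rewrite addrA; congr (_ + _ + _).
rewrite mulmx_sumr; apply: eq_big_nat => r /andP[_ rt].
by rewrite mulmxA Atrans_succ.
Qed.

Variable pi : nat -> 'rV[R]_m.
Hypothesis Hpi : forall t, pi t = pi t.+1 *m A t.

Lemma pi_prop s t : (s <= t)%N -> pi s = pi t *m Atrans A t s.
Proof.
move=> st; rewrite -(subnKC st); elim: (t - s)%N => [|k IH].
  by rewrite addn0 Atrans_refl mulmx1.
by rewrite addnS Atrans_succ ?leq_addr // mulmxA -Hpi.
Qed.

Lemma pibar t : pi t *m X t = pi 0%N *m X 0%N + \sum_(0 <= r < t) pi r.+1 *m U r.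
Proof.
rewrite X_expand mulmxDr mulmxA -pi_prop // mulmx_sumr; congr (_ + _).
apply: eq_big_nat => r /andP[_ rt].
by rewrite mulmxA -pi_prop.
Qed.

Lemma rowdiff (M : 'M[R]_m) (Y : 'M[R]_(m, p)) (q : 'rV[R]_m) i :
  row i (M *m Y) - q *m Y = \sum_j (M i j - q 0 j) *: row j Y.
Proof.
rewrite row_mul !mulmx_sum_row -sumrB; apply: eq_bigr => j _.
by rewrite scalerBl mxE.
Qed.

Lemma dev t i : row i (X t) - pi t *m X t =
  \sum_j (Atrans A t 0 i j - pi 0%N 0 j) *: row j (X 0%N) +
  \sum_(0 <= r < t) \sum_j (Atrans A t r.+1 i j - pi r.+1 0 j) *: row j (U r).
Proof.
rewrite pibar {1}X_expand raddfD opprD addrACA rowdiff; congr (_ + _).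
rewrite raddf_sum -sumrB; apply: eq_bigr => r _; exact: rowdiff.
Qed.

End Consensus.

Section Jensen.
Variable R : realType.

Lemma jensen_sq n (a x : 'I_n -> R) : (forall j, 0 <= a j) -> \sum_j a j = 1 ->
  (\sum_j a j * x j) ^+ 2 <= \sum_j a j * x j ^+ 2.
Proof.
move=> a0 a1; set M := \sum_j a j * x j.
have H : 0 <= \sum_j a j * (x j - M) ^+ 2.
  by apply: sumr_ge0 => j _; rewrite mulr_ge0 ?sqr_ge0.
rewrite (eq_bigr (fun j => a j * x j ^+ 2 - (2*M) * (a j * x j) + M^+2 * a j)) in H; last by move=> j _; ring.
rewrite big_split sumrB /= -!mulr_sumr -/M a1 in H.
lra.

Qed.

Lemma sum_sq_le n (x : 'I_n -> R) : (\sum_j x j) ^+ 2 <= n%:R * \sum_j x j ^+ 2.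
Proof.
case: n x => [|n] x; first by rewrite !big_ord0 expr0n /= mul0r.
have np : 0 < n.+1%:R :> R by rewrite ltr0n.
have := @jensen_sq n.+1 (fun _ => n.+1%:R^-1) x.
rewrite -!mulr_sumr sumr_const card_ord.
have ip : 0 < n.+1%:R^-1 :> R by rewrite invr_gt0.
have cN : n.+1%:R^-1 * n.+1%:R = 1 :> R by rewrite mulVf ?gt_eqF.
move=> /(_ (fun _ => ltW ip)).
rewrite -[_ *+ n.+1]mulr_natr cN => /(_ erefl).
set S := \sum_i x i; set Q := \sum_i x i ^+ 2; set c := n.+1%:R^-1; set N := n.+1%:R.
move=> h.
have e1 : S ^+ 2 = (c * S) ^+ 2 * N ^+ 2.
  by rewrite /c /N; field; rewrite addrC natr1 pnatr_eq0.
rewrite e1; apply: le_trans (ler_wpM2r (exprn_ge0 2 (ltW np)) h) _.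
by rewrite /c /N le_eqVlt; apply/orP; left; apply/eqP; field; rewrite addrC natr1 pnatr_eq0.
Qed.

Variable p : nat.
Lemma enorm_conv_sq n (a : 'I_n -> R) (y : 'I_n -> 'rV[R]_p) :
  (forall j, 0 <= a j) -> \sum_j a j = 1 ->
  enorm (\sum_j a j *: y j) ^+ 2 <= \sum_j a j * enorm (y j) ^+ 2.
Proof.
move=> a0 a1; apply: le_trans (jensen_sq (fun j => enorm (y j)) a0 a1).
rewrite ler_pXn2r ?nnegrE ?enorm_ge0 ?sumr_ge0 // => [|j _]; last by rewrite mulr_ge0 ?enorm_ge0.
apply: le_trans (enorm_sum_le a y) _; apply: ler_sum => j _.
by rewrite ger0_norm.
Qed.
End Jensen.

Lemma enorm_sumle (R : realType) (p : nat) (I : Type) (r : seq I) (P : pred I) (f : I -> 'rV[R]_p) :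
  enorm (\sum_(i <- r | P i) f i) <= \sum_(i <- r | P i) enorm (f i).
Proof.
elim/big_ind2: _ => [|x1 x2 y1 y2 H1 H2|j _] //.
- by rewrite enorm0.
- by apply: le_trans (enormD _ _) _; exact: lerD.
Qed.

Lemma dotp_sumZ (R : realType) (p n : nat) (c : 'rV[R]_p) (a : 'I_n -> R) (x : 'I_n -> 'rV[R]_p) :
  dotp c (\sum_i a i *: x i) = \sum_i a i * dotp c (x i).
Proof. by rewrite dotp_sumr; apply: eq_bigr => i _; rewrite dotpZr. Qed.

Lemma zmod_aux (V : zmodType) (x S d : V) : x = S + (x - (S - d) - d).
Proof. by rewrite opprB addrCA -addrA -(opprB S d) addNr addr0. Qed.

Unset Implicit Arguments.
Theorem proposition8 (R : realType) (m p : nat)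
  (A : nat -> 'M[R]_m) (Om : 'I_m -> set 'rV[R]_p) (c : 'rV[R]_p)
  (alpha : nat -> R) (pi : nat -> 'rV[R]_m)
  (B lam eta Rb : R)
  (theta : nat -> 'I_m -> 'rV[R]_p) (w : nat -> 'rV[R]_p) :
  (* standing assumptions *)
  (forall t, row_stochastic (A t)) ->
  (forall i, Om i !=set0) -> (forall i, closed (Om i)) -> (forall i, convex_set (Om i)) ->
  [set x | forall i, Om i x] !=set0 ->
  (forall t, 0 < alpha t) ->
  (* assumptions on pi *)
  (forall t j, 0 <= pi t ord0 j) -> (forall t, \sum_(j < m) pi t ord0 j = 1) ->
  (forall t, pi t = pi t.+1 *m A t) ->
  0 < B -> 0 < lam -> lam < 1 ->
  (forall s t i j, (t <= s)%N -> `|Atrans A s t i j - pi t ord0 j| <= B * lam ^+ (s - t)) ->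
  0 < eta -> (forall t i, eta <= pi t ord0 i) ->
  (* linear regularity *)
  1 <= Rb ->
  (forall x, conv_hull (\bigcup_i Om i) x ->
     dist_to x [set y | forall i, Om i y] <= Rb * \big[Order.max/0]_(i < m) dist_to x (Om i)) ->
  (* initialization and stepsizes *)
  (forall i, Om i (theta 0%N i)) ->
  (forall t, alpha t.+1 <= alpha t) ->
  (* DPG iteration *)
  (forall t i, is_proj (Om i)
     (\sum_(j < m) A t i j *: theta t j - alpha t *: c) (theta t.+1 i)) ->
  (* w(t) = P_Omega[thetabar(t)] *)
  (forall t, is_proj [set x | forall i, Om i x]
     (\sum_(j < m) pi t ord0 j *: theta t j) (w t)) ->
  let phi := fun t i => theta t.+1 i - (\sum_(j < m) A t i j *: theta t j - alpha t *: c) in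
  let beta := fun t => \sum_(i < m) enorm (phi t i) in
  let psi := fun t => alpha t * \sum_(0 <= r < t) lam ^+ (t - r - 1) * beta r in
  let C := enorm c in
  let D1 := B * \sum_(j < m) enorm (theta 0%N j) in
  let D2 := m%:R * B * C in
  let D3 := 2 * C * (1 + Rb / eta) in
  let D4 := eta / 2 in
  let b := Num.sqrt (eta / m%:R) in
  let a := D3 * B / ((1 - lam) * b) in
  let D5 := C ^+ 2 + a ^+ 2 / 2 in
  let D13 := D1 * D3 in
  let D23 := D2 * D3 in
  forall v, (forall i, Om i v) -> forall t : nat,
    \sum_(i < m) pi t.+1 ord0 i * enorm (theta t.+1 i - v) ^+ 2 + a * b * psi t.+1
    <= \sum_(i < m) pi t ord0 i * enorm (theta t i - v) ^+ 2 + a * b * psi t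
       - 2 * alpha t * dotp c (w t - v) + D5 * alpha t ^+ 2
       - D4 * \sum_(i < m) enorm (phi t i) ^+ 2
       + D13 * alpha t * lam ^+ t
       + D23 * alpha t * \sum_(0 <= r < t) lam ^+ (t - r - 1) * alpha r.
Proof.
move=> HA Hne Hcl Hcv HOm Halpha Hpi0 Hpi1 Hpi B0 lam0 lam1 Hmix eta0 Heta Rb1 Hreg
  Hinit Hdec Hiter Hw phi beta psi C D1 D2 D3 D4 b a D5 D13 D23 v Hv t.
have m0 : (0 < m)%N.
  rewrite lt0n; apply/eqP => m00; move: (Hpi1 0%N).
  rewrite big1 => [/eqP|j _]; first by rewrite eq_sym oner_eq0.
  by have := ltn_ord j; rewrite {2}m00.
pose i0 : 'I_m := Ordinal m0.
have eta1 : eta <= 1.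
  apply: le_trans (Heta 0%N i0) _; rewrite -(Hpi1 0%N) (bigD1 i0) //= lerDl.
  by apply: sumr_ge0 => *; exact: Hpi0.
have C0 : 0 <= C by exact: enorm_ge0.
have Rb0 : 0 <= Rb by lra.
have al0 : 0 < alpha t := Halpha t.
have mpos : 0 < m%:R :> R by rewrite ltr0n.
have b0 : 0 < b by rewrite sqrtr_gt0 divr_gt0.
have bsq : b ^+ 2 = eta / m%:R by rewrite sqr_sqrtr // divr_ge0 // ltW.
have D30 : 0 <= D3 by rewrite mulr_ge0 ?mulr_ge0 // addr_ge0 // divr_ge0 // ltW.
have D3R : 2 * C * Rb <= D3.
  have : Rb <= Rb / eta by rewrite ler_pdivlMr //; nra.
  move=> h; rewrite /D3; apply: ler_wpM2l; [by rewrite mulr_ge0 | lra].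
have l1 : 0 < 1 - lam by lra.
have a0 : 0 <= a by rewrite /a divr_ge0 // mulr_ge0 // ltW.
have abl : a * b * (1 - lam) = D3 * B.
  by rewrite /a; field; rewrite !gt_eqF.
pose X := fun s => \matrix_(i < m) theta s i.
pose U := fun s => \matrix_(i < m) (phi s i - alpha s *: c).
have rowX : forall s i, row i (X s) = theta s i by move=> s i; rewrite rowK.
have rowU : forall s i, row i (U s) = phi s i - alpha s *: c by move=> s i; rewrite rowK.
have HX : forall s, X s.+1 = A s *m X s + U s.
  move=> s; apply/row_matrixP => i; rewrite raddfD /= row_mul mulmx_sum_row rowX rowU.
  under eq_bigr do rewrite rowX.
  rewrite /phi.
  under eq_bigr do rewrite mxE.
  exact: zmod_aux.
have thin : forall s i, Om i (theta s i).
  by case=> [|s] i; [exact: Hinit | exact: (Hiter s i).1].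
set tbar := \sum_(j < m) pi t ord0 j *: theta t j.
have bar : tbar = pi t *m X t.
  by rewrite mulmx_sum_row; apply: eq_bigr => j _; rewrite rowX.
set Sb := \sum_(0 <= r < t) lam ^+ (t - r - 1) * beta r.
set Sa := \sum_(0 <= r < t) lam ^+ (t - r - 1) * alpha r.
set E := D1 * lam ^+ t + B * Sb + m%:R * B * C * Sa.
have devb : forall i, enorm (theta t i - tbar) <= E.
  move=> i; rewrite bar -(rowX t i) (dev HX Hpi).
  apply: le_trans (enormD _ _) _.
  rewrite /E -addrA; apply: lerD.
    apply: le_trans (enorm_sum_le _ _) _.
    rewrite /D1 mulrAC mulr_sumr; apply: ler_sum => j _; rewrite rowX.
    apply: ler_wpM2r; first exact: enorm_ge0.
    by have := Hmix t 0%N i j (leq0n t); rewrite subn0 mulrC.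
  apply: le_trans; first exact: enorm_sumle.
  rewrite /Sb /Sa !mulr_sumr -big_split; apply: ler_sum_nat => r /andP[_ rt].
  apply: le_trans (enorm_sum_le _ _) _.
  have ex : (t - r.+1 = t - r - 1)%N by rewrite subnS subn1.
  have hb : 0 <= B * lam ^+ (t - r - 1) by rewrite mulr_ge0 ?exprn_ge0 ?ltW.
  apply: le_trans (_ : \sum_j B * lam ^+ (t - r - 1) * (enorm (phi r j) + alpha r * C) <= _).
    apply: ler_sum => j _; rewrite rowU; apply: ler_pM.
    - exact: normr_ge0.
    - exact: enorm_ge0.
    - by have := Hmix t r.+1 i j rt; rewrite ex.
    apply: le_trans (enormD _ _) _; rewrite enormN enormZ ger0_norm //; exact: ltW.
  rewrite -mulr_sumr big_split /= sumr_const card_ord -/(beta r).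
  rewrite le_eqVlt; apply/orP; left; apply/eqP. rewrite -mulr_natl. ring.
have E0 : 0 <= E := le_trans (enorm_ge0 _) (devb i0).
have hconv : conv_hull (\bigcup_i Om i) tbar.
  exists m, (fun j => pi t ord0 j), (fun j => theta t j).
  split; first exact: Hpi0.
  split; first exact: Hpi1.
  split => // k; exists k => //; exact: thin.
have hmax : \big[Order.max/0]_(i < m) dist_to tbar (Om i) <= E.
  apply: bigmax_le => // i _.
  apply: le_trans (_ : enorm (tbar - theta t i) <= E); last by rewrite enormBC.
  apply: ge_inf; last by exists (theta t i).
  by exists 0 => y [z _ <-]; exact: enorm_ge0.
have hdist : enorm (tbar - w t) <= Rb * E.
  apply: le_trans (_ : dist_to tbar [set y | forall i, Om i y] <= _).
    apply: lb_le_inf; first by exists (enorm (tbar - w t)); exists (w t) => //; exact: (Hw t).1.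
    by move=> y [z Hz <-]; exact: (Hw t).2 z Hz.
  apply: le_trans (Hreg _ hconv) _; exact: ler_wpM2l.
set z := fun i => \sum_(j < m) A t i j *: theta t j.
have hi : forall i, enorm (theta t.+1 i - v) ^+ 2 <=
    \sum_j A t i j * enorm (theta t j - v) ^+ 2 - 2 * alpha t * dotp c (z i - v)
    + alpha t ^+ 2 * C ^+ 2 - enorm (phi t i) ^+ 2.
  move=> i.
  have hp : enorm (theta t.+1 i - v) ^+ 2 <=
      enorm ((z i - alpha t *: c) - v) ^+ 2 - enorm (phi t i) ^+ 2.
    exact: (proj_ineq (Hcv i) (Hiter t i) (Hv i)).
  apply: le_trans hp _.
  rewrite addrAC enormB_sq dotpZr enormZ (gtr0_norm al0) exprMn (dotpC (z i - v) c).
  have hz : z i - v = \sum_j A t i j *: (theta t j - v).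
    by rewrite (eq_bigr (fun j => A t i j *: theta t j - A t i j *: v)) ?sumrB -?scaler_suml ?(HA t).2 ?scale1r // => j _; rewrite scalerBr.
  have := enorm_conv_sq (fun j => theta t j - v) ((HA t).1 i) ((HA t).2 i).
  rewrite -hz -/C; lra.
have zrow : forall i, z i = row i (A t *m X t).
  by move=> i; rewrite row_mul mulmx_sum_row; apply: eq_bigr => j _; rewrite rowX mxE.
have sz : \sum_i pi t.+1 ord0 i *: z i = tbar.
  by under eq_bigr do rewrite zrow; rewrite -mulmx_sum_row mulmxA -Hpi bar.
set P1 := \sum_(i < m) pi t.+1 ord0 i * enorm (theta t.+1 i - v) ^+ 2.
set P0 := \sum_(i < m) pi t ord0 i * enorm (theta t i - v) ^+ 2.
set Phi2 := \sum_(i < m) enorm (phi t i) ^+ 2.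
have F1 : P1 <= P0 - 2 * alpha t * dotp c (tbar - v) + alpha t ^+ 2 * C ^+ 2 - eta * Phi2.
  apply: le_trans (_ : P1 <= \sum_i pi t.+1 ord0 i * (\sum_j A t i j * enorm (theta t j - v) ^+ 2
      - 2 * alpha t * dotp c (z i - v) + alpha t ^+ 2 * C ^+ 2 - enorm (phi t i) ^+ 2)) _.
    by apply: ler_sum => i _; apply: ler_wpM2l; [exact: Hpi0 | exact: hi].
  have s1 : \sum_i pi t.+1 ord0 i * (\sum_j A t i j * enorm (theta t j - v) ^+ 2) = P0.
    rewrite /P0; under eq_bigr do rewrite mulr_sumr; rewrite exchange_big /=.
    apply: eq_bigr => j _; rewrite (Hpi t) mxE mulr_suml; apply: eq_bigr => i _; by rewrite mulrA.
  have s2 : \sum_i pi t.+1 ord0 i * (2 * alpha t * dotp c (z i - v)) = 2 * alpha t * dotp c (tbar - v).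
    under eq_bigr do rewrite mulrCA.
    rewrite -mulr_sumr -dotp_sumZ; congr (_ * dotp c _).
    under eq_bigr do rewrite scalerBr.
    by rewrite sumrB sz -scaler_suml Hpi1 scale1r.
  have s3 : \sum_i pi t.+1 ord0 i * (alpha t ^+ 2 * C ^+ 2) = alpha t ^+ 2 * C ^+ 2.
    by rewrite -mulr_suml Hpi1 mul1r.
  have s4 : eta * Phi2 <= \sum_i pi t.+1 ord0 i * enorm (phi t i) ^+ 2.
    rewrite /Phi2 mulr_sumr; apply: ler_sum => i _; apply: ler_wpM2r; [exact: sqr_ge0 | exact: Heta].
  have split : \sum_i pi t.+1 ord0 i * (\sum_j A t i j * enorm (theta t j - v) ^+ 2
      - 2 * alpha t * dotp c (z i - v) + alpha t ^+ 2 * C ^+ 2 - enorm (phi t i) ^+ 2) =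
    \sum_i pi t.+1 ord0 i * (\sum_j A t i j * enorm (theta t j - v) ^+ 2)
    - \sum_i pi t.+1 ord0 i * (2 * alpha t * dotp c (z i - v))
    + \sum_i pi t.+1 ord0 i * (alpha t ^+ 2 * C ^+ 2)
    - \sum_i pi t.+1 ord0 i * enorm (phi t i) ^+ 2.
    by rewrite -sumrB -big_split -sumrB /=; apply: eq_bigr => i _; ring.
  rewrite split s1 s2 s3; lra.
set nd := enorm (tbar - w t).
have F2 : dotp c (tbar - v) = dotp c (w t - v) + dotp c (tbar - w t).
  by rewrite -dotpDr [w t - v + _]addrC addrA subrK.
have F3 : - dotp c (tbar - w t) <= C * nd.
  by have := dotp_ge1 c (tbar - w t); rewrite -/C -/nd; lra.
have F3' : 2 * alpha t * (- dotp c (tbar - w t)) <= 2 * alpha t * (C * nd).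
  by apply: ler_wpM2l => //; rewrite mulr_ge0 // ltW.
have F4 : 2 * alpha t * (C * nd) <= alpha t * (D3 * E).
  apply: le_trans (_ : 2 * alpha t * (C * (Rb * E)) <= _).
    by apply: ler_wpM2l; [rewrite mulr_ge0 // ltW | apply: ler_wpM2l].
  have -> : 2 * alpha t * (C * (Rb * E)) = alpha t * ((2 * C * Rb) * E) by ring.
  by apply: ler_wpM2l; [exact: ltW | exact: ler_wpM2r].
have F5 : alpha t * (D3 * E) = D13 * alpha t * lam ^+ t + D3 * B * (alpha t * Sb) + D23 * alpha t * Sa.
  by rewrite /E /D13 /D23 /D2; ring.
have Sb0 : 0 <= Sb.
  apply: sumr_ge0 => r _; apply: mulr_ge0; first by rewrite exprn_ge0 // ltW.
  by apply: sumr_ge0 => i _; exact: enorm_ge0.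
have bt0 : 0 <= beta t by apply: sumr_ge0 => i _; exact: enorm_ge0.
have Srec : \sum_(0 <= r < t.+1) lam ^+ (t.+1 - r - 1) * beta r = lam * Sb + beta t.
  rewrite big_nat_recr //= subSnn subnn expr0 mul1r; congr (_ + _).
  rewrite /Sb mulr_sumr; apply: eq_big_nat => r /andP[_ rt].
  have -> : (t.+1 - r - 1 = (t - r - 1).+1)%N.
    by rewrite -subnDA addn1 subSS subn1 prednK // subn_gt0.
  by rewrite exprS mulrA.
have ab0 : 0 <= a * b by rewrite mulr_ge0 // ltW.
have F6 : a * b * psi t.+1 <= a * b * (alpha t * (lam * Sb + beta t)).
  rewrite /psi Srec; apply: ler_wpM2l => //; apply: ler_wpM2r; last exact: Hdec.
  by rewrite addr_ge0 // mulr_ge0 // ltW.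
have F6' : a * b * (alpha t * (lam * Sb + beta t)) =
    a * b * (alpha t * Sb) - D3 * B * (alpha t * Sb) + a * b * alpha t * beta t.
  by rewrite -abl; ring.
have F7 : a * b * alpha t * beta t <= a ^+ 2 * alpha t ^+ 2 / 2 + b ^+ 2 * beta t ^+ 2 / 2.
  have := sqr_ge0 (a * alpha t - b * beta t); nra.
have F8 : b ^+ 2 * beta t ^+ 2 <= eta * Phi2.
  rewrite bsq; have := sum_sq_le (fun i => enorm (phi t i)); rewrite -/(beta t) -/Phi2 => h.
  apply: le_trans (_ : eta / m%:R * (m%:R * Phi2) <= _).
    by apply: ler_wpM2l => //; rewrite divr_ge0 // ltW.
  by rewrite mulrA divfK ?gt_eqF.
have psit : psi t = alpha t * Sb by [].
rewrite psit /D5 /D4; rewrite F2 in F1.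
have e2 : a ^+ 2 * alpha t ^+ 2 / 2 = a ^+ 2 / 2 * alpha t ^+ 2 by ring.
lra.
Qed.
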